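(* Let $k$ be a field, $H=\langle a_1,\dots,a_\ell\rangle$ a numerical semigroup with $\gcd(a_1,\dots,a_\ell)=1$, $R=k[[H]]=k[[t^{a_1},\dots,t^{a_\ell}]]\subseteq k[[t]]$, $f=\mathrm f(H)$ the Frobenius number and $\mathrm{PF}(H)$ the set of pseudo-Frobenius numbers, and $K=\sum_{c\in\mathrm{PF}(H)}Rt^{f-c}$. Suppose that $R$ is a $2$-AGL ring. Then $$K/R=\bigoplus_{c\in\mathrm{PF}(H)\setminus\{f\}}R\cdot\overline{t^{f-c}}$$ (an internal direct sum), where $\overline{(\ast)}$ denotes the image in $K/R$.
   Context: $\mathrm f(H)=\max(\mathbb Z\setminus H)$; $\mathrm{PF}(H)=\{n\in\mathbb Z\setminus H: n+a_i\in H \text{ for all } i\}$. $K$ is a canonical fractional ideal of $R$ (i.e. $R\subseteq K\subseteq\overline R=k[[t]]$ and $K\cong\mathrm K_R$). $R$ is $2$-AGL if it has a canonical ideal $I$ (proper ideal $\cong\mathrm K_R$) containing a parameter ideal as a reduction with $\mathrm e_1(I)=\mathrm e_0(I)-\ell_R(R/I)+2$; equivalently $\ell_R(R[K]/K)=2$. *)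

(* Defs.v *)
From mathcomp Require Import all_boot all_order all_algebra.
Set Implicit Arguments. Unset Strict Implicit. Unset Printing Implicit Defensive.
Import Order.TTheory GRing.Theory Num.Theory.
Local Open Scope ring_scope.

(** Formal power series k[[t]] : coefficient functions nat -> k. *)
Definition ps (k : fieldType) := nat -> k.

Section PS.
Variable k : fieldType.
Definition ps0 : ps k := fun _ => 0.
Definition ps1 : ps k := fun n => (n == 0%N)%:R.
Definition psX (m : nat) : ps k := fun n => (n == m)%:R.
Definition psadd (x y : ps k) : ps k := fun n => x n + y n.
Definition psopp (x : ps k) : ps k := fun n => - x n.
Definition psmul (x y : ps k) : ps k :=
  fun n => \sum_(i < n.+1) x i * y (n - i)%N.

Definition Rsubmod (R L : ps k -> Prop) : Prop :=
  L ps0 /\ (forall x y, L x -> L y -> L (psadd x y)) /\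
  (forall r x, R r -> L x -> L (psmul r x)).

Definition subring (S : ps k -> Prop) : Prop :=
  S ps1 /\ (forall x y, S x -> S y -> S (psadd x y)) /\
  (forall x, S x -> S (psopp x)) /\ (forall x y, S x -> S y -> S (psmul x y)).

Definition ring_gen (K : ps k -> Prop) : ps k -> Prop :=
  fun x => forall S, subring S -> (forall y, K y -> S y) -> S x.

Definition Rchain (R N M : ps k -> Prop) (n : nat) (L : nat -> ps k -> Prop) :=
  L 0%N = N /\ L n = M /\ (forall i, (i <= n)%N -> Rsubmod R (L i)) /\
  (forall i, (i < n)%N -> (forall x, L i x -> L i.+1 x) /\ L i <> L i.+1).

Definition length_eq (R N M : ps k -> Prop) (n : nat) : Prop :=
  (exists L, Rchain R N M n L) /\ (forall m L, Rchain R N M m L -> (m <= n)%N).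

(** M/N is the internal direct sum of the cyclic submodules R * (image of g_i). *)
Definition quot_direct_sum (R N M : ps k -> Prop) (g : seq (ps k)) : Prop :=
  (forall x, M x <-> exists y (r : nat -> ps k), N y /\ (forall i, R (r i)) /\
      x = psadd y (\big[psadd/ps0]_(i < size g) psmul (r i) (nth ps0 g i))) /\
  (forall r : nat -> ps k, (forall i, R (r i)) ->
      N (\big[psadd/ps0]_(i < size g) psmul (r i) (nth ps0 g i)) ->
      forall i, (i < size g)%N -> N (psmul (r i) (nth ps0 g i))).
End PS.

Definition inH (a : seq nat) (n : nat) : Prop :=
  exists m : 'I_(size a) -> nat, n = (\sum_(i < size a) m i * nth 0 a i)%N.
Definition inHz (a : seq nat) (z : int) : Prop :=
  exists n : nat, z = n%:Z /\ inH a n.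

Definition frobenius (a : seq nat) (f : int) : Prop :=
  ~ inHz a f /\ forall n : int, f < n -> inHz a n.

Definition pseudo_frobenius (a : seq nat) (c : int) : Prop :=
  ~ inHz a c /\ forall i, (i < size a)%N -> inHz a (c + (nth 0 a i)%:Z).

Definition semigroup_ring (k : fieldType) (a : seq nat) : ps k -> Prop :=
  fun x => forall n, x n != 0 -> inH a n.

Arguments semigroup_ring k a _ : clear implicits.

Definition canonK (k : fieldType) (a : seq nat) (f : int) (pf : seq int) : ps k -> Prop :=
  fun x => exists r : int -> ps k, (forall c, semigroup_ring k a (r c)) /\
    x = \big[@psadd k/@ps0 k]_(c <- pf) psmul (r c) (@psX k `|f - c|%N).

Arguments canonK k a f pf _ : clear implicits.

Definition two_AGL (k : fieldType) (R K : ps k -> Prop) : Prop :=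
  length_eq R K (ring_gen K) 2.

(* Main.v *)
Require Import Defs.
From mathcomp Require Import all_boot all_order all_algebra.
From mathcomp Require Import zify ring.
From Stdlib Require Import FunctionalExtensionality Classical.
Import Order.TTheory GRing.Theory Num.Theory.
Local Open Scope ring_scope.

Section PSAlg.
Variable k : fieldType.
Implicit Types x y z : ps k.

Definition T (N : nat) (x : ps k) : {poly k} := \poly_(i < N) x i.

Lemma psmul_coef N x y n : (n < N)%N -> psmul x y n = (T N x * T N y)`_n.
Proof.
move=> hn; rewrite coefM /psmul; apply: eq_bigr => i _.
rewrite /T !coef_poly; have hi := ltn_ord i.
rewrite ifT; last by apply: leq_ltn_trans hn; rewrite -ltnS.
rewrite ifT //; apply: leq_ltn_trans hn; exact: leq_subr.
Qed.

Lemma coefM_eq (p q r : {poly k}) n :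
  (forall j, (j <= n)%N -> p`_j = q`_j) -> (p * r)`_n = (q * r)`_n.
Proof.
move=> h; rewrite !coefM; apply: eq_bigr => i _; rewrite h //; exact: ltn_ord i.
Qed.

Lemma coefM_eqr (p q r : {poly k}) n :
  (forall j, (j <= n)%N -> p`_j = q`_j) -> (r * p)`_n = (r * q)`_n.
Proof. by move=> h; rewrite mulrC (@coefM_eq p q r n h) mulrC. Qed.

Lemma psmulA x y z : psmul (psmul x y) z = psmul x (psmul y z).
Proof.
apply: functional_extensionality => n.
rewrite (psmul_coef n.+1) // (psmul_coef n.+1 x) //.
rewrite (coefM_eq _ (T n.+1 x * T n.+1 y)); last first.
  move=> j hj; rewrite /T coef_poly ifT //; exact: psmul_coef.
rewrite (coefM_eqr (T n.+1 (psmul y z)) (T n.+1 y * T n.+1 z)); last first.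
  move=> j hj; rewrite /T coef_poly ifT //; exact: psmul_coef.
by rewrite mulrA.
Qed.

Lemma psmulC x y : psmul x y = psmul y x.
Proof.
apply: functional_extensionality => n.
by rewrite !(psmul_coef n.+1) // mulrC.
Qed.

Lemma psmulX x e n : psmul x (psX k e) n = if (e <= n)%N then x (n - e)%N else 0.
Proof.
rewrite (psmul_coef (n + e).+1) //; last by rewrite ltnS leq_addr.
have -> : T (n + e).+1 (psX k e) = 'X^e.
  apply/polyP => i; rewrite /T coef_poly coefXn /psX.
  case: ifP => // hi; case: eqP => // hie; subst; move: hi; rewrite ltnS; lia.
rewrite coefMXn /T coef_poly.
case: (leqP e n) => h //; rewrite ifT //; lia.
Qed.

Lemma psXD e1 e2 : psmul (psX k e1) (psX k e2) = psX k (e1 + e2).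
Proof.
apply: functional_extensionality => n; rewrite psmulX /psX.
case: (leqP e2 n) => h.
  by congr (_%:R); apply/eqP; case: eqP; case: eqP => //; lia.
by case: eqP => //; lia.
Qed.

Lemma psmul1 x : psmul x (ps1 k) = x.
Proof.
by apply: functional_extensionality => n; rewrite (psmulX x 0) subn0.
Qed.

Lemma psmul0 x : psmul x (ps0 k) = ps0 k.
Proof.
apply: functional_extensionality => n; rewrite /psmul big1 // => i _.
by rewrite /ps0 mulr0.
Qed.

Lemma psmul0l x : psmul (ps0 k) x = ps0 k.
Proof. by rewrite psmulC psmul0. Qed.

Lemma psmulDr x y z : psmul x (psadd y z) = psadd (psmul x y) (psmul x z).
Proof.
apply: functional_extensionality => n; rewrite /psmul /psadd -big_split /=.
by apply: eq_bigr => i _; rewrite mulrDr.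
Qed.

Lemma psadd0 x : psadd x (ps0 k) = x.
Proof. by apply: functional_extensionality => n; rewrite /psadd /ps0 addr0. Qed.
Lemma psadd0l x : psadd (ps0 k) x = x.
Proof. by apply: functional_extensionality => n; rewrite /psadd /ps0 add0r. Qed.
Lemma psaddA x y z : psadd x (psadd y z) = psadd (psadd x y) z.
Proof. by apply: functional_extensionality => n; rewrite /psadd addrA. Qed.
Lemma psaddC x y : psadd x y = psadd y x.
Proof. by apply: functional_extensionality => n; rewrite /psadd addrC. Qed.

Lemma big_eval (I : Type) (s : seq I) (P : pred I) (F : I -> ps k) n :
  (\big[@psadd k/(ps0 k)]_(i <- s | P i) F i) n = \sum_(i <- s | P i) F i n.
Proof.
by rewrite (big_morph (fun x : ps k => x n) (id1 := 0) (op1 := +%R)).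
Qed.

Lemma psmul_big (I : Type) (s : seq I) (P : pred I) (F : I -> ps k) x :
  psmul x (\big[@psadd k/(ps0 k)]_(i <- s | P i) F i) =
  \big[@psadd k/(ps0 k)]_(i <- s | P i) psmul x (F i).
Proof.
by rewrite (big_morph (psmul x) (id1 := ps0 k) (op1 := @psadd k)) //;
  [move=> ??; exact: psmulDr | exact: psmul0].
Qed.

End PSAlg.

Lemma nthRN (s : seq nat) i : nth (0%R : nat) s i = nth 0%N s i.
Proof. by []. Qed.

Section Semi.
Variable a : seq nat.

Lemma inH0 : inH a 0.
Proof. by exists (fun _ => 0%N); rewrite big1. Qed.

Lemma inHD m n : inH a m -> inH a n -> inH a (m + n).
Proof.
move=> [m1 ->] [m2 ->]; exists (fun i => m1 i + m2 i)%N.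
by rewrite -big_split /=; apply: eq_bigr => i _; rewrite mulnDl.
Qed.

Lemma inH_gen i : (i < size a)%N -> inH a (nth 0 a i).
Proof.
move=> hi; exists (fun j : 'I_(size a) => nat_of_bool (j == Ordinal hi)).
rewrite (bigD1 (Ordinal hi)) //= eqxx mul1n big1 ?addn0 // => j hj.
by rewrite (negbTE hj).
Qed.

Lemma inH_dec h : inH a h -> h = 0%N \/
  exists i, [/\ (i < size a)%N, (nth 0 a i <= h)%N & inH a (h - nth 0 a i)].
Proof.
move=> [m ->]; case: (pickP (fun j => m j != 0%N)) => [j hj|h0]; last first.
  left; rewrite big1 // => i _; move: (h0 i) => /= /negbFE/eqP ->; by [].
right; exists j; split => //.
  by rewrite (bigD1 j) //=; apply: leq_trans (leq_addr _ _); rewrite leq_pmull // lt0n.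
exists (fun i => if i == j then (m i).-1 else m i).
rewrite (bigD1 j) //= [in RHS](bigD1 j) //= eqxx.
have -> : \sum_(i < size a | i != j) (if i == j then (m i).-1 else m i) * nth 0 a i
   = \sum_(i < size a | i != j) m i * nth 0 a i.
  by apply: eq_bigr => i /negbTE ->.
move: hj; case: (m j) => //= p _; rewrite mulSn -addnA; exact: addKn.
Qed.

Definition Hz := inHz a.

Lemma inHz_nat (n : nat) : inHz a n%:Z <-> inH a n.
Proof. by split => [[m [/eqP]]|h]; [rewrite eqz_nat => /eqP -> | exists n]. Qed.

Lemma inHzD x y : inHz a x -> inHz a y -> inHz a (x + y).
Proof.
move=> [m [-> hm]] [n [-> hn]]; exists (m + n)%N; split => //; exact: inHD.
Qed.

Lemma inHz_ge0 x : inHz a x -> 0 <= x.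
Proof. by move=> [m [-> _]]. Qed.

Lemma PF_add c h : pseudo_frobenius a c -> inH a h -> h <> 0%N ->
  inHz a (c + h%:Z).
Proof.
move=> [_ hc] hh h0; case: (inH_dec _ hh) => [//|[i [hi hle hr]]].
have -> : c + h%:Z = (c + (nth 0%N a i)%:Z) + (h - nth 0%N a i)%N%:Z.
  rewrite -addrA; congr (_ + _); lia.
apply: inHzD; first exact: hc.
by apply/inHz_nat.
Qed.

Lemma maximality (f : int) (pf : seq int) :
  all (fun x => 0 < x)%N a -> frobenius a f ->
  (forall c : int, c \in pf <-> pseudo_frobenius a c) ->
  forall m : int, ~ inHz a m -> exists c, c \in pf /\ inHz a (c - m).
Proof.
move=> hpos [hf hfr] hpf.
have mlef m : ~ inHz a m -> m <= f.
  by move=> hm; case: (lerP m f) => // hlt; case: hm; apply: hfr.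
suff: forall N m, ~ inHz a m -> (`|f - m| <= N)%N -> exists c, c \in pf /\ inHz a (c - m).
  by move=> H m hm; apply: (H _ m hm).
elim=> [|N IH] m hm hN.
  have em : m = f by move: (mlef m hm) hN; lia.
  subst m; exists f; split; last by rewrite subrr; exists 0%N; split => //; exact: inH0.
  apply/hpf; split => // i hi; apply: hfr.
  have := (all_nthP 0%N hpos i hi); rewrite /= ?nthRN; lia.
case: (classic (forall i, (i < size a)%N -> inHz a (m + (nth 0%N a i)%:Z))) => hall.
  exists m; split; first by apply/hpf; split.
  by rewrite subrr; exists 0%N; split => //; exact: inH0.
have [i hi] : exists i, ~ ((i < size a)%N -> inHz a (m + (nth 0%N a i)%:Z)).
  by apply: not_all_ex_not.
have hi1 : (i < size a)%N by case: (boolP (i < size a)%N) => // /negbTE hh; case: hi; rewrite hh.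
have hi2 : ~ inHz a (m + (nth 0%N a i)%:Z) by move=> hh; apply: hi.
have hpi := all_nthP 0%N hpos i hi1.
have := mlef _ hi2; have := mlef _ hm => h1 h2.
move: hpi h1 h2 hN; rewrite /= ?nthRN => hpi h1 h2 hN.
have [c [hc hcz]] := IH _ hi2 ltac:(lia).
exists c; split => //.
have -> : c - m = (c - (m + (nth 0%N a i)%:Z)) + (nth 0%N a i)%:Z by rewrite ?nthRN; lia.
apply: inHzD => //; apply/inHz_nat; exact: inH_gen.
Qed.

End Semi.

Set Implicit Arguments. Unset Strict Implicit.

Arguments inHD {a m n}. Arguments inHzD {a x y}. Arguments inHz_nat {a n}.
Arguments maximality {a f pf}. Arguments inH_gen {a i}. Arguments PF_add {a c h}.
Arguments inH_dec {a h}.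

Lemma sum_nz (k : fieldType) (I : eqType) (s : seq I) (P : pred I) (F : I -> k) :
  \sum_(i <- s | P i) F i != 0 -> exists i, [/\ i \in s, P i & F i != 0].
Proof.
move=> h; apply: NNPP => hn; move/eqP: h; apply; apply: big1_seq => i /andP [hp hi].
by apply/eqP; apply: negbNE; apply/negP => hf; apply: hn; exists i.
Qed.

Section Main.
Variables (k : fieldType) (a : seq nat) (f : int) (pf : seq int).
Hypothesis hpos : all (fun x => 0 < x)%N a.
Hypothesis hfrob : frobenius a f.
Hypothesis huniq : uniq pf.
Hypothesis hpf : forall c : int, c \in pf <-> pseudo_frobenius a c.

Notation R := (semigroup_ring k a).
Notation K := (canonK k a f pf).
Notation X := (psX k).
Implicit Types x y z : ps k.

Lemma R_mul x y : R x -> R y -> R (psmul x y).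
Proof.
move=> hx hy n /sum_nz [i [_ _ hi]].
have hx' : x i != 0 by apply: contraNneq hi => ->; rewrite mul0r.
have hy' : y (n - i)%N != 0 by apply: contraNneq hi => ->; rewrite mulr0.
have := inHD (hx _ hx') (hy _ hy'); rewrite subnKC //; rewrite -ltnS; exact: ltn_ord.
Qed.

Lemma R0 : R (ps0 k).
Proof. by move=> n; rewrite /ps0 eqxx. Qed.

Lemma R_X d : inH a d -> R (X d).
Proof. by move=> hd n; rewrite /psX; case: (eqVneq n d) => [-> //|hne]; rewrite eqxx. Qed.

Lemma R1 : R (ps1 k).
Proof. exact: (R_X (inH0 a)). Qed.

Lemma R_add x y : R x -> R y -> R (psadd x y).
Proof.
move=> hx hy n; rewrite /psadd => h.
case: (eqVneq (x n) 0) => [h0|]; last exact: hx.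
by apply: hy; move: h; rewrite h0 add0r.
Qed.

Lemma f_in_pf : f \in pf.
Proof.
case: hfrob => hf hfr; apply/hpf; split => // i hi; apply: hfr.
have := (all_nthP 0%N hpos i hi); rewrite /= ?nthRN; lia.
Qed.

Lemma c_le_f c : c \in pf -> c <= f.
Proof.
move/hpf => [hc _]; case: (lerP c f) => // hlt; case: hc; case: hfrob => _; exact.
Qed.

Lemma eE c : c \in pf -> (`|f - c|%N)%:Z = f - c.
Proof. move/c_le_f => h; lia. Qed.

Lemma K_single c s : c \in pf -> R s -> K (psmul s (X `|f - c|%N)).
Proof.
move=> hc hs; exists (fun d => if d == c then s else ps0 k); split.
  by move=> d; case: eqP => _ //; exact: R0.
apply: functional_extensionality => n; rewrite big_eval (bigD1_seq c) //= eqxx.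
rewrite big1 ?addr0 // => d /negbTE ->; by rewrite psmul0l.
Qed.

Lemma R_sub_K s : R s -> K s.
Proof.
move=> hs; have := K_single f_in_pf hs.
by rewrite subrr /= -/(ps1 k) psmul1.
Qed.

Lemma K_sub : Rsubmod R K.
Proof.
split; first exact: (R_sub_K R0).
split.
  move=> x y [r [hr ->]] [r' [hr' ->]].
  exists (fun c => psadd (r c) (r' c)); split; first by move=> c; apply: R_add.
  apply: functional_extensionality => n; rewrite /psadd !big_eval -big_split /=.
  by apply: eq_bigr => c _; rewrite !psmulX; case: ifP => _ //; rewrite addr0.
move=> s x hs [r [hr ->]]; exists (fun c => psmul s (r c)); split.
  by move=> c; apply: R_mul.
by rewrite psmul_big; apply: eq_bigr => c _; rewrite psmulA.
Qed.

Lemma K_vanish x (y : nat) : K x -> inHz a (f - y%:Z) -> x y = 0.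
Proof.
move=> [r [hr ->]] hy; rewrite big_eval big1_seq // => c /andP [_ hc].
rewrite psmulX; case: ifP => // hle.
case: (eqVneq (r c (y - `|f - c|)%N) 0) => // hnz; have := hr c _ hnz => hin.
move/hpf: (hc) => [hcz _]; exfalso; apply: hcz.
have -> : c = (y - `|f - c|)%N%:Z + (f - y%:Z).
  have := eE hc; move: hle; lia.
by apply: inHzD => //; apply/inHz_nat.
Qed.

Lemma K_mono (y : nat) : ~ inHz a (f - y%:Z) -> K (X y).
Proof.
move=> hy; have [c [hc [d [hd hin]]]] := maximality hpos hfrob hpf _ hy.
have hyd : y = (d + `|f - c|)%N by have := eE hc; move: hd; lia.
by rewrite hyd -psXD; apply: K_single => //; apply: R_X.
Qed.

Lemma RG_K x : K x -> ring_gen K x.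
Proof. by move=> hx S _ hS; apply: hS. Qed.

Lemma RG_add x y : ring_gen K x -> ring_gen K y -> ring_gen K (psadd x y).
Proof. by move=> hx hy S hSr hS; case: (hSr) => _ [hadd _]; apply: hadd; [apply: hx|apply: hy]. Qed.

Lemma RG_mul x y : ring_gen K x -> ring_gen K y -> ring_gen K (psmul x y).
Proof. by move=> hx hy S hSr hS; case: (hSr) => _ [_ [_ hm]]; apply: hm; [apply: hx|apply: hy]. Qed.

Lemma RG_sub : Rsubmod R (ring_gen K).
Proof.
split; first by apply: RG_K; apply: R_sub_K; exact: R0.
split; first exact: RG_add.
by move=> r x hr hx; apply: RG_mul => //; apply: RG_K; apply: R_sub_K.
Qed.


Lemma psmulDl x y z : psmul (psadd x y) z = psadd (psmul x z) (psmul y z).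
Proof. by rewrite psmulC psmulDr !(psmulC _ z). Qed.

Lemma chain3 (F b c0 : nat) : (c0 < b)%N -> (b < F)%N ->
  inHz a (f - F%:Z) -> inHz a (f - b%:Z) -> inHz a (f - c0%:Z) ->
  ring_gen K (X F) -> ring_gen K (X b) -> ring_gen K (X c0) ->
  exists L, Rchain R K (ring_gen K) 3 L.
Proof.
move=> hcb hbF hF hb hc gF gb gc.
pose L1 := fun x : ps k => exists u s, K u /\ R s /\ x = psadd u (psmul s (X F)).
pose L2 := fun x : ps k => exists u s1 s2, K u /\ R s1 /\ R s2 /\
   x = psadd (psadd u (psmul s1 (X F))) (psmul s2 (X b)).
have [Kp0 [Kadd Kmul]] := K_sub.
exists (fun i => match i with 0 => K | 1 => L1 | 2 => L2 | _ => ring_gen K end).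
split; first by [].
split; first by [].
split.
  move=> [|[|[|i]]] _ /=.
  - exact: K_sub.
  - split; first by exists (ps0 k), (ps0 k); do 2?split => //; [exact: R0|by rewrite psmul0l psadd0].
    split.
      move=> x y [u [s [hu [hs ->]]]] [u' [s' [hu' [hs' ->]]]].
      exists (psadd u u'), (psadd s s'); do 2?split; [exact: Kadd|exact: R_add|].
      apply: functional_extensionality => n; rewrite /psadd !psmulX.
      by case: ifP => _; ring.
    move=> r x hr [u [s [hu [hs ->]]]]; exists (psmul r u), (psmul r s).
    do 2?split; [exact: Kmul|exact: R_mul|by rewrite psmulDr psmulA].
  - split.
      exists (ps0 k), (ps0 k), (ps0 k); do 3?split => //; try exact: R0.
      by rewrite !psmul0l !psadd0.
    split.
      move=> x y [u [s1 [s2 [hu [hs1 [hs2 ->]]]]]] [u' [s1' [s2' [hu' [hs1' [hs2' ->]]]]]].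
      exists (psadd u u'), (psadd s1 s1'), (psadd s2 s2').
      do 3?split; [exact: Kadd|exact: R_add|exact: R_add|].
      apply: functional_extensionality => n; rewrite /psadd !psmulX.
      by case: ifP => _; case: ifP => _; ring.
    move=> r x hr [u [s1 [s2 [hu [hs1 [hs2 ->]]]]]].
    exists (psmul r u), (psmul r s1), (psmul r s2).
    do 3?split; [exact: Kmul|exact: R_mul|exact: R_mul|by rewrite !psmulDr !psmulA].
  - exact: RG_sub.
move=> [|[|[|i]]] //= _; split.
- move=> x hx; exists x, (ps0 k); do 2?split => //; [exact: R0|by rewrite psmul0l psadd0].
- move=> E; have h : L1 (X F).
    exists (ps0 k), (ps1 k); do 2?split => //; [exact: R1|by rewrite psmulC psmul1 psadd0l].
  rewrite -E in h; have := K_vanish h hF; rewrite /psX eqxx => /eqP; by rewrite oner_eq0.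
- move=> x [u [s [hu [hs ->]]]]; exists u, s, (ps0 k); do 3?split => //; first exact: R0.
  by rewrite psmul0l psadd0.
- move=> E; have h : L2 (X b).
    exists (ps0 k), (ps0 k), (ps1 k); do 3?split => //; try exact: R0; first exact: R1.
    by rewrite !psmul0l (psmulC _ (ps1 k)) psmul1 !psadd0l.
  rewrite -E in h; case: h => [u [s [hu [hs hx]]]].
  have := congr1 (fun g => g b) hx; rewrite /psadd psmulX (K_vanish hu hb) /psX eqxx.
  have -> : (F <= b)%N = false by apply/negbTE; rewrite -ltnNge.
  by rewrite add0r => /eqP; rewrite oner_eq0.
- move=> x [u [s1 [s2 [hu [hs1 [hs2 ->]]]]]].
  apply: RG_add; first apply: RG_add.
  + exact: RG_K.
  + by apply: RG_mul => //; apply: RG_K; apply: R_sub_K.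
  + by apply: RG_mul => //; apply: RG_K; apply: R_sub_K.
- move=> E; have h := gc; rewrite -E in h.
  case: h => [u [s1 [s2 [hu [hs1 [hs2 hx]]]]]].
  have := congr1 (fun g => g c0) hx; rewrite /psadd !psmulX (K_vanish hu hc) /psX eqxx.
  have -> : (F <= c0)%N = false by apply/negbTE; rewrite -ltnNge; exact: ltn_trans hbF.
  have -> : (b <= c0)%N = false by apply/negbTE; rewrite -ltnNge.
  rewrite !add0r => /eqP; by rewrite oner_eq0.
Qed.

Lemma no_overlap (hlen : forall m L, Rchain R K (ring_gen K) m L -> (m <= 2)%N)
  (n : nat) ci cj : ~ inH a n -> ci \in pf -> cj \in pf -> ci != cj ->
  (`|f - ci| <= n)%N -> (`|f - cj| <= n)%N ->
  inH a (n - `|f - ci|) -> inH a (n - `|f - cj|) -> False.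
Proof.
move=> hn hci hcj hij hei hej hhi hhj.
have eEi := eE hci; have eEj := eE hcj.
have [hfz hfr] := hfrob.
have nlef : n%:Z <= f.
  case: (lerP n%:Z f) => // hlt; case: hn; apply/inHz_nat; exact: hfr.
set F := `|f|%N; have fF : f = F%:Z by rewrite /F; lia.
set z := (F - n)%N.
have hci' := hci; move/hpf: hci' => [hciH hciPF].
have hcj' := hcj; move/hpf: hcj' => [hcjH hcjPF].
have hz : ~ inHz a z%:Z.
  move=> hz; apply: hciH.
  have -> : ci = z%:Z + (n - `|f - ci|)%N%:Z by rewrite /z; lia.
  by apply: inHzD => //; apply/inHz_nat.
have Kz : K (X z).
  apply: K_mono; have -> : f - z%:Z = n%:Z by rewrite /z; lia.
  by move/inHz_nat.
have Kn : K (X n).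
  by apply: K_mono; have -> : f - n%:Z = z%:Z by rewrite /z; lia.
have gF : ring_gen K (X F).
  have -> : F = (z + n)%N by rewrite /z; lia.
  by rewrite -psXD; apply: RG_mul; apply: RG_K.
have hnz : forall c c', c \in pf -> c' \in pf -> c != c' -> `|f - c|%N = n ->
    (`|f - c'| <= n)%N -> inH a (n - `|f - c'|) -> False.
  move=> c c' hc hc' hcc' he he' hh'.
  have := eE hc; have := eE hc' => e1 e2.
  move/hpf: (hc') => [hc'H _]; apply: hc'H.
  have -> : c' = c + (n - `|f - c'|)%N%:Z by lia.
  apply: PF_add => //; first exact/hpf.
  move=> h0; move/eqP: hcc'; apply; lia.
have gy : forall c, c \in pf -> ring_gen K (X (z + `|f - c|)%N).
  move=> c hc; rewrite -psXD; apply: RG_mul; apply: RG_K => //.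
  apply: K_mono; have -> : f - (`|f - c|%N)%:Z = c by have := eE hc; lia.
  by move/hpf: hc => [].
have ltF : forall c c', c \in pf -> c' \in pf -> c != c' -> (`|f - c| <= n)%N ->
    (`|f - c'| <= n)%N -> inH a (n - `|f - c'|) -> (z + `|f - c| < F)%N.
  move=> c c' hc hc' hcc' he he' hh'.
  case: (ltnP `|f - c|%N n) => h; first by rewrite /z; lia.
  exfalso; apply: (hnz c c') => //; lia.
have hyi := ltF _ _ hci hcj hij hei hej hhj.
have hyj := ltF _ _ hcj hci (negbT (introF eqP (fun e => (negP hij) (introT eqP (esym e))))) hej hei hhi.
have hfy : forall c, c \in pf -> (`|f - c| <= n)%N -> inH a (n - `|f - c|) ->
    inHz a (f - (z + `|f - c|)%N%:Z).
  move=> c hc he hh; have -> : f - (z + `|f - c|)%N%:Z = (n - `|f - c|)%N%:Z.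
    by have := eE hc; rewrite /z; lia.
  by apply/inHz_nat.
have hF0 : inHz a (f - F%:Z) by rewrite fF subrr; exists 0%N; split => //; exact: inH0.
have hneq : (z + `|f - ci|)%N != (z + `|f - cj|)%N.
  apply/eqP => e; move/eqP: hij; apply; lia.
case: (ltngtP (z + `|f - ci|)%N (z + `|f - cj|)%N) => hlt.
- have [L hL] := chain3 hlt hyj hF0 (hfy _ hcj hej hhj) (hfy _ hci hei hhi) gF (gy _ hcj) (gy _ hci).
  by have := hlen _ _ hL.
- have [L hL] := chain3 hlt hyi hF0 (hfy _ hci hei hhi) (hfy _ hcj hej hhj) gF (gy _ hci) (gy _ hcj).
  by have := hlen _ _ hL.
- by move/eqP: hneq.
Qed.

End Main.

Unset Implicit Arguments. Set Strict Implicit.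

Theorem proposition2p4 (k : fieldType) (a : seq nat) (f : int) (pf : seq int) :
  all (fun x => 0 < x)%N a ->
  (\big[gcdn/0]_(x <- a) x)%N = 1%N ->
  frobenius a f ->
  uniq pf -> (forall c : int, c \in pf <-> pseudo_frobenius a c) ->
  two_AGL (semigroup_ring k a) (canonK k a f pf) ->
  quot_direct_sum (semigroup_ring k a) (semigroup_ring k a) (canonK k a f pf)
    [seq @psX k `|f - c|%N | c <- pf & c != f].
Proof.
move=> hpos _ hfrob huniq hpf [_ hlen].
have hfin := f_in_pf hpos hfrob huniq hpf.
set pf' := [seq c <- pf | c != f].
have upf' : uniq pf' by apply: filter_uniq.
have mpf' : forall i, (i < size pf')%N -> nth 0 pf' i \in pf /\ nth 0 pf' i != f.
  move=> i hi; have := mem_nth 0 hi; rewrite mem_filter => /andP [h1 h2]; by split.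
split.
- move=> x; split.
  + move=> [r [hr ->]].
    exists (r f), (fun i => r (nth 0 pf' i)); split; first exact: hr.
    split; first by move=> i; exact: hr.
    apply: functional_extensionality => n; rewrite /psadd !big_eval (bigD1_seq f) //=.
    rewrite subrr /= -/(ps1 k) psmul1; congr (_ + _).
    rewrite -big_filter (big_nth 0) -/pf'.
    rewrite -(big_mkord xpredT (fun i => psmul (r (nth 0 pf' i)) (nth (ps0 k) _ i) n)).
    rewrite size_map; apply: eq_big_nat => i /andP [_ hi].
    by rewrite (nth_map 0).
  + move=> [y [r [hy [hr ->]]]].
    exists (fun c => if c == f then y else r (index c pf')); split.
      by move=> c; case: eqP.
    apply: functional_extensionality => n; rewrite /psadd !big_eval (bigD1_seq f) //=.
    rewrite eqxx subrr /= -/(ps1 k) psmul1; congr (_ + _).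
    symmetry; rewrite -big_filter (big_nth 0) -/pf'.
    rewrite -(big_mkord xpredT (fun i => psmul (r i) (nth (ps0 k) _ i) n)).
    rewrite size_map; apply: eq_big_nat => i /andP [_ hi].
    have [_ hneq] := mpf' i hi.
    by rewrite (nth_map 0) // (negbTE hneq) index_uniq.
- move=> r hr hsum i hi n hn; apply: NNPP => hnH.
  have hi' : (i < size pf')%N by rewrite size_map in hi.
  move: hn; rewrite (nth_map 0) // psmulX; case: ifP => hle; last by rewrite eqxx.
  move=> hri.
  set g := map _ pf' in hsum hi *.
  have hs0 : (\big[@psadd k/(ps0 k)]_(j < size g)
       psmul (r j) (nth (ps0 k) g j)) n = 0.
    case: (eqVneq ((\big[@psadd k/(ps0 k)]_(j < size g)
       psmul (r j) (nth (ps0 k) g j)) n) 0) => // hnz.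
    by case: hnH; apply: hsum.
  rewrite big_eval (bigD1 (Ordinal hi)) //= in hs0.
  have hrest : \sum_(j < size g | j != Ordinal hi)
       psmul (r j) (nth (ps0 k) g j) n != 0.
    apply/eqP => h0; move: hs0; rewrite h0 addr0 (nth_map 0) // psmulX hle => h.
    by move/eqP: hri; apply.
  have [j [_ hj hnzj]] := sum_nz hrest.
  have hsz : size g = size pf' := size_map _ _.
  have hj' : (j < size pf')%N by rewrite -hsz; exact: ltn_ord.
  move: hnzj; rewrite (nth_map 0) // psmulX; case: ifP => hlej; last by rewrite eqxx.
  move=> hrj.
  have [hci hcif] := mpf' i hi'.
  have [hcj hcjf] := mpf' j hj'.
  apply: (no_overlap hpos hfrob huniq hpf hlen hnH hci hcj _ hle hlej).
  + rewrite nth_uniq //; apply: contra hj => /eqP e; apply/eqP; exact: val_inj.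
  + exact: (hr i _ hri).
  + exact: (hr j _ hrj).
Qed.
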